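(* Let $K$ be a field of characteristic $0$ and $a(t),b(t)\in K[t]$. Assume that $Na'(t)+b(t)$ and $a(t)$ are coprime for every positive integer $N$. Let $n$ be a positive integer and $P(t),Q(t)\in K[t]$ satisfy $Q(t)a(t)^n=L^*\cdot P(t)$. Then $P(t)$ is divisible by $a(t)^n$.
   Context: $L=-a(z)\frac{d}{dz}+b(z)$ and its adjoint $L^*$ acts on $K[t]$ by $L^*\cdot P(t)=\frac{d}{dt}(a(t)P(t))+b(t)P(t)=(a'(t)+b(t))P(t)+a(t)P'(t)$. *)

(* Defs.v *)
From mathcomp Require Import all_boot all_order all_algebra.
Set Implicit Arguments. Unset Strict Implicit. Unset Printing Implicit Defensive.
Import GRing.Theory.
Local Open Scope ring_scope.

(* The adjoint L^* of L = -a(z) d/dz + b(z), acting on K[t]: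
   L^* . P = d/dt (a P) + b P. *)
Definition Lstar (K : fieldType) (a b P : {poly K}) : {poly K} :=
  (a * P)^`() + b * P.

(* Main.v *)
Require Import Defs.
From mathcomp Require Import all_boot all_order all_algebra.
Import GRing.Theory.
Local Open Scope ring_scope.

Lemma keyalg (T : comNzRingType) (R1 A X a b R : T) (j : nat) :
  R1 * (a * X) + R * (A * X *+ j.+1) + b * (R * X) =
  X * ((A *+ j.+1 + b) * R + a * R1).
Proof.
rewrite [RHS]mulrDr mulrDl mulrDr [RHS]addrC -addrA.
congr (_ + (_ + _)).
- by rewrite [RHS]mulrC mulrA [R1 * a]mulrC.
- by rewrite -mulrnAl [RHS]mulrC mulrCA mulrA.
- by rewrite [RHS]mulrC mulrA.
Qed.

Theorem lemma3p6 (K : fieldType) (a b : {poly K})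
  (charK : [pchar K] =i pred0)
  (hcop : forall N : nat, (0 < N)%N -> coprimep (a^`() *+ N + b) a)
  (n : nat) (hn : (0 < n)%N) (P Q : {poly K})
  (hPQ : Q * a ^+ n = Lstar a b P) :
  a ^+ n %| P.
Proof.
have [a0|a0] := eqVneq a 0.
  move: hPQ (hcop 1%N isT); rewrite a0; rewrite /Lstar mul0r !deriv0 mul0rn !add0r.
  rewrite coprimep0 expr0n eqn0Ngt hn mulr0 => /esym /eqP.
  rewrite mulf_eq0 => /orP [/eqP -> | /eqP ->]; last by rewrite dvdp0.
  by rewrite eqp01.
suff H : forall j, (j <= n)%N -> a ^+ j %| P by exact: H.
elim=> [|j IH] hj; first by rewrite expr0 dvd1p.
have /dvdpP [R HR] := IH (ltnW hj).
have key : Lstar a b P = a ^+ j * ((a^`() *+ j.+1 + b) * R + a * R^`()).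
  rewrite /Lstar HR mulrCA -exprS derivM deriv_exp /=.
  by rewrite exprS; apply: keyalg.
have hS : a %| (a^`() *+ j.+1 + b) * R + a * R^`().
  have -> : (a^`() *+ j.+1 + b) * R + a * R^`() = Q * a ^+ (n - j).
    apply: (mulfI (expf_neq0 j a0)).
    by rewrite -key -hPQ mulrCA -exprD subnKC // ltnW.
  by rewrite dvdp_mull // -(subnSK hj) exprS dvdp_mulr.
move: hS; rewrite addrC (dvdp_addr _ (dvdp_mulr _ (dvdpp a))).
rewrite Gauss_dvdpr; last by rewrite coprimep_sym hcop.
by rewrite HR exprSr mulrC dvdp_mul2r ?expf_neq0.
Qed.
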